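(* There exist two upper semicomputable symmetric functions $E_1,E_2$ from pairs of binary strings to $\mathbb{N}\cup\{\infty\}$, each of which satisfies the triangle inequality and the condition that there is a constant $c$ with $\#\{y : E_i(x,y)<n\}\le c2^n$ for all integers $n$ and strings $x$, such that no non-negative function $E$ on pairs of binary strings that is bounded by both $E_1$ and $E_2$ satisfies both this counting condition (for some constant $c$) and the triangle inequality.
   Context: A function $E$ is upper semicomputable if the set of triples $(x,y,n)$ with $E(x,y)<n$ is computably enumerable. The triangle inequality means $E(x,z)\le E(x,y)+E(y,z)$ for all strings $x,y,z$. *)

(* Defs.v *)
From HB Require Import structures.
From mathcomp Require Import all_boot all_order all_algebra.
From mathcomp Require Import reals.
Set Implicit Arguments. Unset Strict Implicit. Unset Printing Implicit Defensive.
Import Order.TTheory GRing.Theory Num.Theory.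
Local Open Scope ring_scope.

Notation bstring := (seq bool).

(** * A model of computation: (untyped) primitive recursive functions.
    Arguments are read from a list, missing arguments default to 0. *)
Inductive prf : Type :=
| PZero
| PSucc
| PProj of nat
| PComp of prf & seq prf
| PRec of prf & prf.

Fixpoint prf_eval (f : prf) (v : seq nat) {struct f} : nat :=
  match f with
  | PZero => 0%N
  | PSucc => (head 0%N v).+1
  | PProj i => nth 0%N v i
  | PComp g hs =>
      prf_eval g ((fix evs (l : seq prf) : seq nat :=
                     match l with
                     | [::] => [::]
                     | h :: t => prf_eval h v :: evs t
                     end) hs)
  | PRec g h =>
      let rest := behead v in
      (fix r (k : nat) : nat :=
         match k with
         | 0 => prf_eval g rest
         | k'.+1 => prf_eval h (k' :: r k' :: rest)
         end) (head 0%N v)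
  end.

(** A predicate on a countable type is computably enumerable if it is the
    set of (codes of) outputs of some primitive recursive enumerator
    (output 0 = "nothing enumerated at this step", output m.+1 = code m).
    Codes are given by MathComp's canonical computable injection [pickle]. *)
Definition comp_enum (T : countType) (P : T -> Prop) : Prop :=
  exists f : prf, forall a : T,
    P a <-> exists t : nat, prf_eval f [:: t] = (pickle a).+1.

Inductive natinf : Type := Fin of nat | Inf.

Definition addni (a b : natinf) : natinf :=
  match a, b with Fin m, Fin n => Fin (m + n) | _, _ => Inf end.

Definition leni (a b : natinf) : Prop :=
  match a, b with
  | _, Inf => True
  | Inf, Fin _ => False
  | Fin m, Fin n => (m <= n)%N
  end.

Definition ltni_int (a : natinf) (n : int) : Prop :=
  match a with Fin m => (m%:Z < n)%R | Inf => False end.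

Definition le_real_ni (R : realType) (r : R) (a : natinf) : Prop :=
  match a with Fin m => r <= m%:R | Inf => True end.

Definition upper_semicomputable (E : bstring -> bstring -> natinf) : Prop :=
  comp_enum (fun t : bstring * bstring * int => ltni_int (E t.1.1 t.1.2) t.2).

Definition symmetric_ni (E : bstring -> bstring -> natinf) : Prop :=
  forall x y, E x y = E y x.

Definition triangle_ni (E : bstring -> bstring -> natinf) : Prop :=
  forall x y z, leni (E x z) (addni (E x y) (E y z)).

Definition triangle_R (R : realType) (E : bstring -> bstring -> R) : Prop :=
  forall x y z, E x z <= E x y + E y z.

(** "#{y : lt x y n} <= c 2^n" for every integer n and string x: every finite
    list of distinct such y has length at most c 2^n (so an infinite set
    violates the bound). *)
Definition counting_cond (R : realType)
    (lt : bstring -> bstring -> int -> Prop) : Prop :=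
  exists c : R, forall (n : int) (x : bstring) (s : seq bstring),
    uniq s -> (forall y, y \in s -> lt x y n) ->
    (size s)%:R <= c * (2 : R) ^ n.

Definition counting_ni (R : realType) (E : bstring -> bstring -> natinf) :=
  counting_cond R (fun x y n => ltni_int (E x y) n).

Definition counting_R (R : realType) (E : bstring -> bstring -> R) :=
  counting_cond R (fun x y n => E x y < n%:~R).

(* Main.v *)
Require Import Defs.
From mathcomp Require Import all_boot all_order all_algebra.
From mathcomp Require Import reals.
From mathcomp Require Import zify.
Import Order.TTheory GRing.Theory Num.Theory.

Lemma evalC g hs v : prf_eval (PComp g hs) v = prf_eval g (map (prf_eval^~ v) hs).
Proof. rewrite /=; congr (prf_eval g _); elim: hs => //= h hs ->. Qed.
Lemma evalR0 g h rest : prf_eval (PRec g h) (0 :: rest) = prf_eval g rest.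
Proof. by []. Qed.
Lemma evalRS g h k rest : prf_eval (PRec g h) (k.+1 :: rest) =
  prf_eval h (k :: prf_eval (PRec g h) (k :: rest) :: rest).
Proof. by []. Qed.

Lemma evalS x r : prf_eval PSucc (x :: r) = x.+1. Proof. by []. Qed.
Lemma evalP i v : prf_eval (PProj i) v = nth 0 v i. Proof. by []. Qed.
Definition C1 f F := PComp f [:: F].
Definition C2 f F G := PComp f [:: F; G].
Lemma evalC1 f F v : prf_eval (C1 f F) v = prf_eval f [:: prf_eval F v].
Proof. by rewrite /C1 evalC. Qed.
Lemma evalC2 f F G v : prf_eval (C2 f F G) v = prf_eval f [:: prf_eval F v; prf_eval G v].
Proof. by rewrite /C2 evalC. Qed.

Definition padd := PRec (PProj 0) (C1 PSucc (PProj 1)).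
Lemma padd_eval a b r : prf_eval padd (a :: b :: r) = a + b.
Proof. elim: a => [//|a IH]; by rewrite evalRS IH evalC1 evalP evalS. Qed.
Definition Padd F G := C2 padd F G.
Lemma Padd_eval F G v : prf_eval (Padd F G) v = prf_eval F v + prf_eval G v.
Proof. by rewrite evalC2 padd_eval. Qed.

Definition pmul := PRec PZero (Padd (PProj 1) (PProj 2)).
Lemma pmul_eval a b r : prf_eval pmul (a :: b :: r) = a * b.
Proof. elim: a => [//|a IH]; by rewrite evalRS IH Padd_eval /= mulSn addnC. Qed.
Definition Pmul F G := C2 pmul F G.
Lemma Pmul_eval F G v : prf_eval (Pmul F G) v = prf_eval F v * prf_eval G v.
Proof. by rewrite evalC2 pmul_eval. Qed.

Fixpoint pconst n := if n is n'.+1 then C1 PSucc (pconst n') else PZero.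
Lemma pconst_eval n v : prf_eval (pconst n) v = n.
Proof. elim: n => [//|n IH]; by change (pconst n.+1) with (C1 PSucc (pconst n)); rewrite evalC1 IH. Qed.

Definition ppow2 := PRec (pconst 1) (Padd (PProj 1) (PProj 1)).
Lemma ppow2_eval a r : prf_eval ppow2 (a :: r) = 2 ^ a.
Proof. elim: a => [|a IH]; first by rewrite evalR0 pconst_eval.
by rewrite evalRS IH Padd_eval /= expnS mul2n addnn. Qed.
Definition Ppow2 F := C1 ppow2 F.
Lemma Ppow2_eval F v : prf_eval (Ppow2 F) v = 2 ^ prf_eval F v.
Proof. by rewrite evalC1 ppow2_eval. Qed.

Definition ppred := PRec PZero (PProj 0).
Lemma ppred_eval a r : prf_eval ppred (a :: r) = a.-1.
Proof. by case: a. Qed.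
Definition psubr := PRec (PProj 0) (C1 ppred (PProj 1)).
Lemma psubr_eval b a r : prf_eval psubr (b :: a :: r) = a - b.
Proof. elim: b => [|b IH]; first by rewrite evalR0 /= subn0.
by rewrite evalRS IH evalC1 ppred_eval /= subnS. Qed.
Definition Psub F G := C2 psubr G F.
Lemma Psub_eval F G v : prf_eval (Psub F G) v = prf_eval F v - prf_eval G v.
Proof. by rewrite evalC2 psubr_eval. Qed.

Definition Psucc F := C1 PSucc F.
Lemma Psucc_eval F v : prf_eval (Psucc F) v = (prf_eval F v).+1.
Proof. by rewrite evalC1. Qed.

Fixpoint tri n := if n is n'.+1 then tri n' + n'.+1 else 0.
Definition ptri := PRec PZero (Padd (PProj 1) (Psucc (PProj 0))).
Lemma ptri_eval a r : prf_eval ptri (a :: r) = tri a.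
Proof. elim: a => [//|a IH]; by rewrite evalRS IH Padd_eval Psucc_eval /=. Qed.
Definition Ptri F := C1 ptri F.
Lemma Ptri_eval F v : prf_eval (Ptri F) v = tri (prf_eval F v).
Proof. by rewrite evalC1 ptri_eval. Qed.

Definition podd := PRec PZero (Psub (pconst 1) (PProj 1)).
Lemma podd_eval a r : prf_eval podd (a :: r) = odd a.
Proof. elim: a => [//|a IH]; rewrite evalRS IH Psub_eval pconst_eval /=; by case: (odd a). Qed.
Definition Podd F := C1 podd F.
Lemma Podd_eval F v : prf_eval (Podd F) v = odd (prf_eval F v).
Proof. by rewrite evalC1 podd_eval. Qed.

Definition phalf := PRec PZero (Padd (PProj 1) (Podd (PProj 0))).
Lemma phalf_eval a r : prf_eval phalf (a :: r) = a./2.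
Proof. elim: a => [//|a IH]; rewrite evalRS IH Padd_eval Podd_eval /=.
by rewrite -[in RHS](odd_double_half a) /= addnC; case: (odd a) => //=; rewrite ?uphalf_double ?add1n // half_double. Qed.
Definition Phalf F := C1 phalf F.
Lemma Phalf_eval F v : prf_eval (Phalf F) v = (prf_eval F v)./2.
Proof. by rewrite evalC1 phalf_eval. Qed.

Definition Peq F G := Psub (pconst 1) (Padd (Psub F G) (Psub G F)).
Lemma Peq_eval F G v : prf_eval (Peq F G) v = (prf_eval F v == prf_eval G v).
Proof. rewrite Psub_eval pconst_eval Padd_eval !Psub_eval.
case: eqP => [->|]; rewrite ?subnn //; lia. Qed.

Fixpoint Dn t := if t is k.+1 then Dn k + (k - tri (Dn k) == Dn k) else 0.
Definition pD := PRec PZero (Padd (PProj 1) (Peq (Psub (PProj 0) (Ptri (PProj 1))) (PProj 1))).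
Lemma pD_eval a r : prf_eval pD (a :: r) = Dn a.
Proof. elim: a => [//|a IH]; by rewrite evalRS IH Padd_eval Peq_eval Psub_eval Ptri_eval /=. Qed.
Definition PD F := C1 pD F.
Lemma PD_eval F v : prf_eval (PD F) v = Dn (prf_eval F v).
Proof. by rewrite evalC1 pD_eval. Qed.

Definition Pcode2 F G := Pmul (Ppow2 F) (Psucc (Padd (Ppow2 G) (Ppow2 G))).
Lemma code2 p q : CodeSeq.code [:: p; q] = 2^p * (2^q + 2^q).+1.
Proof. by rewrite /CodeSeq.code /= muln1 addnn. Qed.
Lemma Pcode2_eval F G v : prf_eval (Pcode2 F G) v = CodeSeq.code [:: prf_eval F v; prf_eval G v].
Proof. by rewrite code2 Pmul_eval Ppow2_eval Psucc_eval Padd_eval !Ppow2_eval. Qed.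

Lemma pickle_nseq a : pickle (nseq a false) = 2 ^ a - 1.
Proof.
elim: a => [//|a IH].
change (pickle (nseq a.+1 false)) with (2^0 * (pickle (nseq a false)).*2.+1).
rewrite IH expnS; have := expn_gt0 2 a; lia.
Qed.
Lemma pickle_int m : pickle (Posz m) = 3 * 2 ^ (2 ^ m).
Proof.
change (pickle (Posz m)) with (CodeSeq.code [:: CodeSeq.code [:: m]; 0]).
rewrite /CodeSeq.code /= !muln1 mulnC. by [].
Qed.
Lemma pickle_trip (x y : bstring) (n : int) :
  pickle (x, y, n) = CodeSeq.code [:: CodeSeq.code [:: pickle x; pickle y]; pickle n].
Proof. by []. Qed.

Definition X := PProj 0.
Definition PU := Psub X (Ptri (PD X)).
Definition PM := Psub (PD X) PU.
Definition PA := Phalf PU.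
Definition PB := Psub (Padd PA (Pmul (Podd PU) (Psub (pconst 1) (Podd PA)))) (Pmul (Podd PU) (Podd PA)).

Definition uu t := t - tri (Dn t).
Definition mm t := Dn t - uu t.
Definition aa t := (uu t)./2.
Definition bb t := aa t + odd (uu t) * (1 - odd (aa t)) - odd (uu t) * odd (aa t).

Lemma PU_eval t : prf_eval PU [:: t] = uu t.
Proof. by rewrite /PU Psub_eval Ptri_eval PD_eval. Qed.
Lemma PM_eval t : prf_eval PM [:: t] = mm t.
Proof. by rewrite /PM Psub_eval PD_eval PU_eval. Qed.
Lemma PA_eval t : prf_eval PA [:: t] = aa t.
Proof. by rewrite /PA Phalf_eval PU_eval. Qed.
Lemma PB_eval t : prf_eval PB [:: t] = bb t.
Proof.
rewrite /PB [in LHS]Psub_eval [in LHS]Padd_eval !Pmul_eval !Podd_eval !PA_eval !PU_eval.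
by rewrite Psub_eval pconst_eval Podd_eval PA_eval.
Qed.

Definition Genum FA FB := Psucc (Pcode2 (Pcode2 (Psub (Ppow2 FA) (pconst 1)) (Psub (Ppow2 FB) (pconst 1)))
   (Pmul (pconst 3) (Ppow2 (Ppow2 (Psucc PM))))).
Lemma Genum_eval FA FB t : prf_eval (Genum FA FB) [:: t] =
  (pickle (nseq (prf_eval FA [:: t]) false, nseq (prf_eval FB [:: t]) false, Posz (mm t).+1)).+1.
Proof.
rewrite /Genum Psucc_eval !Pcode2_eval !Psub_eval !Ppow2_eval !pconst_eval Pmul_eval pconst_eval.
by rewrite !Ppow2_eval Psucc_eval PM_eval pickle_trip !pickle_nseq pickle_int.
Qed.

Lemma enumP (P : bstring * bstring * int -> Prop) F (g : nat -> bstring * bstring * int) :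
  (forall t, prf_eval F [:: t] = (pickle (g t)).+1) -> (forall t, P (g t)) ->
  (forall a, P a -> exists t, g t = a) -> comp_enum P.
Proof.
move=> HF Hs Hc; exists F => a; split.
  by move=> /Hc [t <-]; exists t; rewrite HF.
by move=> [t]; rewrite HF => -[] /(pcan_inj pickleK) <-.
Qed.

Lemma Dn_tri d j : j <= d -> Dn (tri d + j) = d.
Proof.
elim: d j => [|d IHd] j.
  by rewrite leqn0 => /eqP ->.
elim: j => [_|j IHj hj].
  have -> : tri d.+1 + 0 = (tri d + d).+1 by rewrite /= addn0 addnS.
  by rewrite [LHS]/= IHd // addKn eqxx addn1.
have -> : tri d.+1 + j.+1 = (tri d.+1 + j).+1 by rewrite addnS.
rewrite [LHS]/= IHj ?(ltnW hj) // addKn.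
have -> : (j == d.+1) = false by apply/negbTE; rewrite neq_ltn hj.
by rewrite addn0.
Qed.

Lemma uu_mm_surj u m : exists t, uu t = u /\ mm t = m.
Proof.
exists (tri (u + m) + u); rewrite /mm /uu Dn_tri ?leq_addr // addKn; split=> //.
by rewrite addKn.
Qed.

Lemma half_flip' (ob : bool) h (o : bool) :
  ((ob + h.*2) + o * (1 - ob) - o * ob)./2 = h.
Proof.
case: ob; case: o.
- have -> : (true + h.*2 + true * (1 - true) - true * true) = false + h.*2 by rewrite -!addnn /=; lia.
  by rewrite half_bit_double.
- have -> : (true + h.*2 + false * (1 - true) - false * true) = true + h.*2 by rewrite -!addnn /=; lia.
  by rewrite half_bit_double.
- have -> : (false + h.*2 + true * (1 - false) - true * false) = true + h.*2 by rewrite -!addnn /=; lia.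
  by rewrite half_bit_double.
- have -> : (false + h.*2 + false * (1 - false) - false * false) = false + h.*2 by rewrite -!addnn /=; lia.
  by rewrite half_bit_double.
Qed.
Lemma half_flip a (o : bool) : (a + o * (1 - odd a) - o * odd a)./2 = a./2.
Proof. by have := half_flip' (odd a) (a./2) o; rewrite odd_double_half. Qed.

Lemma ab_surj a b m : a./2 == b./2 -> exists t, [/\ aa t = a, bb t = b & mm t = m].
Proof.
move=> /eqP hab.
have [t [ht hm]] := uu_mm_surj ((a != b) + a.*2) m.
exists t; have ha : aa t = a by rewrite /aa ht half_bit_double.
split=> //; rewrite /bb ha ht oddD odd_double addbF.
case: eqP => [->|ne] /=; first by rewrite !mul0n subn0 addn0.
rewrite !mul1n.
move: (odd_double_half a) (odd_double_half b); rewrite hab.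
case: (odd a); case: (odd b) => /=; lia.
Qed.

Definition isz (x : bstring) := all negb x.
Lemma iszE x : isz x -> x = nseq (size x) false.
Proof. elim: x => //= b x IH /andP [hb hx]; case: b hb => //= _; by rewrite {1}(IH hx). Qed.
Lemma isz_nseq a : isz (nseq a false).
Proof. by elim: a. Qed.

Definition rel1 x y := [&& isz x, isz y & (size x)./2 == (size y)./2].
Definition rel2 x y := [&& isz x, isz y & (size x).+1./2 == (size y).+1./2].
Definition Ecl (r : bstring -> bstring -> bool) x y := if r x y then Fin 0 else Inf.

Lemma ltni_Ecl r x y n : ltni_int (Ecl r x y) n <-> r x y /\ (0 < n)%R.
Proof. rewrite /Ecl; case: (r x y) => /=; [by split => [h|[]] | by split => [|[]]]. Qed.

Lemma half_pred1 a : (a - 1).+1./2 = a./2.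
Proof. by case: a => [|a] //; rewrite subn1. Qed.
Lemma half_pred a b : a./2 == b./2 -> (a - 1).+1./2 == (b - 1).+1./2.
Proof. by rewrite !half_pred1. Qed.

Lemma usc1 : upper_semicomputable (Ecl rel1).
Proof.
apply: (@enumP _ (Genum PA PB) (fun t => (nseq (aa t) false, nseq (bb t) false, Posz (mm t).+1))).
- by move=> t; rewrite Genum_eval PA_eval PB_eval.
- move=> t; apply/ltni_Ecl; split=> //=.
  by rewrite /rel1 !isz_nseq !size_nseq /= /bb half_flip.
- move=> [[x y] n] /= /ltni_Ecl [/and3P [hx hy hxy]].
  case: n => [k|k] // hk.
  have [t [ha hb hm]] := ab_surj _ _ k.-1 hxy.
  exists t; rewrite ha hb hm -(iszE _ hx) -(iszE _ hy).
  by case: k hk {hm}.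
Qed.

Lemma usc2 : upper_semicomputable (Ecl rel2).
Proof.
apply: (@enumP _ (Genum (Psub PA (pconst 1)) (Psub PB (pconst 1)))
   (fun t => (nseq (aa t - 1) false, nseq (bb t - 1) false, Posz (mm t).+1))).
- by move=> t; rewrite Genum_eval [prf_eval (Psub PA _) _]Psub_eval [prf_eval (Psub PB _) _]Psub_eval PA_eval PB_eval pconst_eval.
- move=> t; apply/ltni_Ecl; split=> //=.
  rewrite /rel2 !isz_nseq !size_nseq /=; apply: half_pred.
  by rewrite /bb half_flip.
- move=> [[x y] n] /= /ltni_Ecl [/and3P [hx hy hxy]].
  case: n => [k|k] // hk.
  have [t [ha hb hm]] := ab_surj _ _ k.-1 hxy.
  exists t; rewrite ha hb hm !subn1 /= -(iszE _ hx) -(iszE _ hy).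
  by case: k hk {hm}.
Qed.

Lemma sym_Ecl (r : bstring -> bstring -> bool) : (forall x y, r x y = r y x) -> symmetric_ni (Ecl r).
Proof. by move=> hr x y; rewrite /Ecl hr. Qed.

Lemma tri_Ecl (r : bstring -> bstring -> bool) : (forall x y z, r x y -> r y z -> r x z) -> triangle_ni (Ecl r).
Proof.
move=> hr x y z; rewrite /Ecl.
case hxy: (r x y); case hyz: (r y z); rewrite ?(hr _ _ _ hxy hyz) //=; by case: (r x z).
Qed.

Lemma rel1_sym x y : rel1 x y = rel1 y x.
Proof. by rewrite /rel1 eq_sym; case: (isz x); case: (isz y). Qed.
Lemma rel2_sym x y : rel2 x y = rel2 y x.
Proof. by rewrite /rel2 eq_sym; case: (isz x); case: (isz y). Qed.
Lemma rel1_tr x y z : rel1 x y -> rel1 y z -> rel1 x z.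
Proof. by rewrite /rel1 /rel2 => /and3P [-> _ /eqP ->] /and3P [_ -> /eqP ->]; rewrite eqxx. Qed.
Lemma rel2_tr x y z : rel2 x y -> rel2 y z -> rel2 x z.
Proof. by rewrite /rel1 /rel2 => /and3P [-> _ /eqP ->] /and3P [_ -> /eqP ->]; rewrite eqxx. Qed.

Lemma rel1_cls x : exists k1 k2, forall y, rel1 x y -> y = nseq k1 false \/ y = nseq k2 false.
Proof.
exists ((size x)./2.*2), ((size x)./2.*2.+1) => y /and3P [_ hy /eqP hxy].
rewrite (iszE _ hy); move: (odd_double_half (size y)); rewrite -hxy.
by case: (odd (size y)) => /= <-; [right|left].
Qed.
Lemma rel2_cls x : exists k1 k2, forall y, rel2 x y -> y = nseq k1 false \/ y = nseq k2 false.
Proof.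
exists ((size x).+1./2.*2.-1), ((size x).+1./2.*2) => y /and3P [_ hy /eqP hxy].
rewrite (iszE _ hy); move: (odd_double_half (size y).+1); rewrite -hxy.
by case: (odd (size y).+1) => /= E; [right|left]; congr nseq; move: E; rewrite -addnn; lia.
Qed.

Local Open Scope ring_scope.

Lemma count_Ecl (R : realType) (r : bstring -> bstring -> bool) :
  (forall x, exists k1 k2, forall y, r x y -> y = nseq k1 false \/ y = nseq k2 false) ->
  counting_ni R (Ecl r).
Proof.
move=> hr; exists 1 => n x s us Hs.
case: (ltrP 0 n) => hn.
  have [k1 [k2 hk]] := hr x.
  have hs : (size s <= 2)%N.
    apply: (@leq_trans (size [:: nseq k1 false; nseq k2 false])); last by [].
    apply: uniq_leq_size => // y /Hs /ltni_Ecl [/hk [->|->] _]; rewrite !inE eqxx ?orbT //.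
  case: n hn {Hs} => [k|k] // hk0.
  have kp : (1 <= k)%N by [].
  rewrite mul1r -[_ ^ _]/(2 ^+ k) -natrX ler_nat.
  apply: (leq_trans hs); case: k kp {hk0} => [//|k _]; rewrite expnS; have := expn_gt0 2 k; lia.
case: s us Hs => [|y s] _ Hs.
  by rewrite mul1r /= exprz_ge0.
have := Hs y; rewrite inE eqxx => /(_ isT) /ltni_Ecl [_ h].
by move: hn; rewrite leNgt h.
Qed.

Lemma step_le0 (R : realType) (E : bstring -> bstring -> R) k :
  (forall x y, le_real_ni (E x y) (Ecl rel1 x y)) ->
  (forall x y, le_real_ni (E x y) (Ecl rel2 x y)) ->
  E (nseq k false) (nseq k.+1 false) <= 0.
Proof.
move=> h1 h2.
have hh : k.+1./2 = (odd k + k./2)%N by rewrite /= uphalf_half.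
case ok: (odd k).
- have := h2 (nseq k false) (nseq k.+1 false).
  have h3 : k.+2./2 = (k./2).+1 by [].
  by rewrite /Ecl /rel2 !isz_nseq !size_nseq hh h3 ok add1n eqxx.
- have := h1 (nseq k false) (nseq k.+1 false).
  by rewrite /Ecl /rel1 !isz_nseq !size_nseq hh ok add0n eqxx.
Qed.

Theorem proposition3 (R : realType) :
  exists E1 E2 : bstring -> bstring -> natinf,
    [/\ upper_semicomputable E1, symmetric_ni E1, triangle_ni E1 & counting_ni R E1] /\
    [/\ upper_semicomputable E2, symmetric_ni E2, triangle_ni E2 & counting_ni R E2] /\
    ~ (exists E : bstring -> bstring -> R,
         [/\ forall x y, 0 <= E x y,
             forall x y, le_real_ni (E x y) (E1 x y),
             forall x y, le_real_ni (E x y) (E2 x y),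
             counting_R E & triangle_R E]).
Proof.
exists (Ecl rel1), (Ecl rel2); split; last split.
- split; [exact: usc1 | exact: sym_Ecl rel1_sym | exact: tri_Ecl rel1_tr | exact: count_Ecl rel1_cls].
- split; [exact: usc2 | exact: sym_Ecl rel2_sym | exact: tri_Ecl rel2_tr | exact: count_Ecl rel2_cls].
move=> [E [h0 h1 h2 [c hc] htri]].
have hz : forall k, E (nseq 0 false) (nseq k false) <= 0.
  elim=> [|k IH].
    have := htri (nseq 0 false) (nseq 1 false) (nseq 0 false).
    move=> ht; apply: (le_trans ht).
    have := h1 (nseq 1 false) (nseq 0 false); rewrite /Ecl /rel1 !isz_nseq !size_nseq /= => hs'.
    rewrite -[0 in X in _ <= X](addr0 0); apply: lerD; [exact: (step_le0 _ _ 0 h1 h2) | exact: hs'].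
  apply: (le_trans (htri _ (nseq k false) _)).
  by rewrite -[0 in X in _ <= X](addr0 0) lerD // (step_le0 _ _ k h1 h2).
set N := Num.bound `|c * 2|.
have us : uniq (mkseq (fun k => nseq k false) N).
  by apply: mkseq_uniq => a b /(congr1 size); rewrite !size_nseq.
have hN : c * 2 < N%:R.
  apply: (le_lt_trans (ler_norm _)); exact: archi_boundP.
have := hc 1 (nseq 0 false) _ us; rewrite size_mkseq expr1z => H.
suff : (N%:R <= c * 2) by rewrite leNgt hN.
apply: H => y /mapP [k _ ->]; apply: (le_lt_trans (hz k)).
by rewrite ltr01.
Qed.
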